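(* Let $p$ be a prime, $k$ an integer with $3\le k\le p-1$, and $A\subseteq\mathbb{Z}/p\mathbb{Z}$ with $|A|\ge k+2$. Let \[ S_k(A)=\{a_1+a_2+k a_3 : a_1,a_2,a_3\in A \text{ pairwise distinct}\}. \] Then: (i) if $|A|\le (p+6)/3$, then $|S_k(A)|\ge 3|A|-6$; (ii) if $|A|=(p+7)/3$, then $|S_k(A)|\ge p-2$; (iii) if $|A|\ge (p+8)/3$, then $S_k(A)=\mathbb{Z}/p\mathbb{Z}$.
   Context: Here $k a_3$ denotes the $k$-fold multiple of $a_3$ in $\mathbb{Z}/p\mathbb{Z}$. *)

(* Defs.v *)
From HB Require Import structures.
From mathcomp Require Import all_boot all_order all_algebra.
Set Implicit Arguments. Unset Strict Implicit. Unset Printing Implicit Defensive.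
Import GRing.Theory.
Local Open Scope ring_scope.

Definition Sk (p k : nat) (A : {set 'F_p}) : {set 'F_p} :=
  [set x : 'F_p | [exists a1 in A, exists a2 in A, exists a3 in A,
     [&& a1 != a2, a1 != a3, a2 != a3 & x == a1 + a2 + a3 *+ k]]].

(* Main.v *)
Require Import Defs.
From HB Require Import structures.
From mathcomp Require Import all_boot all_order all_algebra.
From mathcomp Require Import zify ring.
Set Implicit Arguments. Unset Strict Implicit. Unset Printing Implicit Defensive.
Import GRing.Theory.
Local Open Scope ring_scope.


Section OneD.
Variable F : finFieldType.

Definition wt (B : {set F}) (a : F) := (\prod_(b in B :\ a) (a - b))^-1.
Definition mu (B : {set F}) (e : nat) := \sum_(a in B) a ^+ e * wt B a.

Lemma mu_eq (B : {set F}) e : (e < #|B|)%N -> mu B e = (e == #|B|.-1)%:R.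
Proof.
move=> He.
pose P a := \prod_(b in B :\ a) ('X - b%:P).
have sizeP a : a \in B -> size (P a) = #|B|.
  move=> aB; rewrite /P -big_enum size_prod_XsubC -cardE.
  by rewrite (cardsD1 a B) aB.
have monP a : P a \is monic by rewrite /P -big_enum monic_prod_XsubC.
have wt0 a : wt B a != 0.
  rewrite /wt invr_eq0 prodf_seq_neq0; apply/allP => b _; apply/implyP.
  by rewrite !inE subr_eq0 eq_sym => /andP[].
have Pev a c : a \in B -> c \in B -> (P a).[c] = if c == a then (wt B a)^-1 else 0.
  move=> aB cB; rewrite /P horner_prod.
  case: eqP => [->|ca]; first by rewrite /wt invrK; apply: eq_bigr => b _; rewrite hornerXsubC.
  rewrite (bigD1 c) /=; last by rewrite !inE cB andbT; apply/eqP.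
  by rewrite hornerXsubC subrr mul0r.
pose q := \sum_(a in B) (a ^+ e * wt B a) *: P a - 'X^e.
have q0 : q = 0.
  apply/eqP; apply/negPn/negP => qn0.
  have Hall : all (root q) (enum B).
    apply/allP => c; rewrite mem_enum => cB.
    rewrite /root /q hornerD hornerN hornerXn horner_sum.
    rewrite (bigD1 c) //= big1 ?addr0.
      by rewrite hornerZ Pev // eqxx -mulrA mulfV // mulr1 subrr.
    by move=> a /andP[aB ac]; rewrite hornerZ Pev // eq_sym (negbTE ac) mulr0.
  have := max_poly_roots qn0 Hall (enum_uniq (mem B)).
  rewrite -cardE ltnNge => /negP; apply.
  rewrite /q; apply: leq_trans (size_polyD _ _) _.
  rewrite geq_max size_polyN size_polyXn He andbT.
  apply: (big_ind (fun r : {poly F} => size r <= #|B|)%N) => //.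
    by rewrite size_poly0.
    by move=> r s Hr Hs; apply: leq_trans (size_polyD _ _) _; rewrite geq_max Hr.
  by move=> a aB; apply: leq_trans (size_scale_leq _ _) _; rewrite sizeP.
have := congr1 (fun r : {poly F} => r`_(#|B|.-1)) q0.
rewrite /q coefB coef_sum coefXn coef0 => /eqP; rewrite subr_eq0 => /eqP H.
rewrite eq_sym -H.
rewrite /mu; apply: eq_bigr => a aB; rewrite coefZ.
have := monP a; rewrite monicE lead_coefE sizeP // => /eqP ->.
by rewrite mulr1.
Qed.

Lemma mu0 (B : {set F}) e : (e < #|B|.-1)%N -> mu B e = 0.
Proof. by move=> h; rewrite mu_eq ?(ltn_eqF h) //; lia. Qed.

Lemma mu1 (B : {set F}) : (0 < #|B|)%N -> mu B #|B|.-1 = 1.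
Proof. by move=> h; rewrite mu_eq ?eqxx //; lia. Qed.

Lemma mu3 (B1 B2 B3 : {set F}) e1 e2 e3 :
  (0 < #|B1|)%N -> (0 < #|B2|)%N -> (0 < #|B3|)%N ->
  (e1 + e2 + e3 <= #|B1|.-1 + #|B2|.-1 + #|B3|.-1)%N ->
  mu B1 e1 * mu B2 e2 * mu B3 e3 =
  [&& e1 == #|B1|.-1, e2 == #|B2|.-1 & e3 == #|B3|.-1]%:R.
Proof.
move=> h1 h2 h3 hs.
case: (ltngtP e1 #|B1|.-1) => c1.
- by rewrite mu0 // !mul0r.
- case: (ltnP e2 #|B2|.-1) => c2.
    by rewrite (mu0 c2) mulr0 mul0r (ltn_eqF c2) andbF.
  have c3 : (e3 < #|B3|.-1)%N by lia.
  by rewrite (mu0 c3) mulr0 (ltn_eqF c3) !andbF.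
rewrite c1 mu1 // mul1r /=.
case: (ltngtP e2 #|B2|.-1) => c2.
- by rewrite mu0 // !mul0r.
- have c3 : (e3 < #|B3|.-1)%N by lia.
  by rewrite (mu0 c3) mulr0 (ltn_eqF c3) !andbF.
rewrite c2 mu1 // mul1r /=.
case: (ltngtP e3 #|B3|.-1) => c3.
- by rewrite mu0.
- lia.
by rewrite c3 mu1.
Qed.
End OneD.


Section Grid.
Variable F : finFieldType.
Variables B1 B2 B3 : {set F}.

Definition GS (f : F -> F -> F -> F) :=
  \sum_(a1 in B1) \sum_(a2 in B2) \sum_(a3 in B3)
     (wt B1 a1 * wt B2 a2 * wt B3 a3) * f a1 a2 a3.

Lemma GS_ext f g : (forall a1 a2 a3, f a1 a2 a3 = g a1 a2 a3) -> GS f = GS g.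
Proof.
by move=> h; apply: eq_bigr => a1 _; apply: eq_bigr => a2 _; apply: eq_bigr => a3 _; rewrite h.
Qed.

Lemma GS_sum (I : Type) (r : seq I) (g : I -> F -> F -> F -> F) :
  GS (fun a1 a2 a3 => \sum_(i <- r) g i a1 a2 a3) = \sum_(i <- r) GS (g i).
Proof.
rewrite /GS.
under eq_bigr do under eq_bigr do under eq_bigr do rewrite mulr_sumr.
under eq_bigr do under eq_bigr do rewrite exchange_big.
under eq_bigr do rewrite exchange_big.
by rewrite exchange_big.
Qed.

Lemma GS_scale c f : GS (fun a1 a2 a3 => c * f a1 a2 a3) = c * GS f.
Proof.
rewrite /GS mulr_sumr; apply: eq_bigr => a1 _; rewrite mulr_sumr; apply: eq_bigr => a2 _.
by rewrite mulr_sumr; apply: eq_bigr => a3 _; rewrite mulrCA.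
Qed.

Lemma GS_add f g : GS (fun a1 a2 a3 => f a1 a2 a3 + g a1 a2 a3) = GS f + GS g.
Proof.
rewrite /GS -big_split; apply: eq_bigr => a1 _; rewrite -big_split; apply: eq_bigr => a2 _.
by rewrite -big_split; apply: eq_bigr => a3 _; rewrite mulrDr.
Qed.

Lemma GS_opp f : GS (fun a1 a2 a3 => - f a1 a2 a3) = - GS f.
Proof.
rewrite (GS_ext (g := fun a1 a2 a3 => (-1) * f a1 a2 a3)); first by rewrite GS_scale mulN1r.
by move=> *; rewrite mulN1r.
Qed.

Lemma GS_mono e1 e2 e3 :
  GS (fun a1 a2 a3 => a1 ^+ e1 * a2 ^+ e2 * a3 ^+ e3) = mu B1 e1 * mu B2 e2 * mu B3 e3.
Proof.
rewrite /GS /mu [in RHS]mulr_suml [in RHS]mulr_suml; apply: eq_bigr => a1 _.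
rewrite -mulrA big_distrlr mulr_sumr; apply: eq_bigr => a2 _.
rewrite mulr_sumr; apply: eq_bigr => a3 _.
rewrite /=; ring.
Qed.

End Grid.


Section Collapse.
Variable F : fieldType.
Variables T1 T2 T3 : nat.

Definition ind (v1 v2 v3 j i l : nat) : F :=
  [&& (j - i - l + v1 == T1)%N, (l + v2 == T2)%N & (i + v3 == T3)%N]%:R.

Lemma collapse (f : nat -> nat -> F) j v1 v2 v3 :
  (v1 <= T1)%N -> (v2 <= T2)%N -> (v3 <= T3)%N ->
  \sum_(i < j.+1) \sum_(l < (j - i).+1) f i l * ind v1 v2 v3 j i l =
  if (j + v1 + v2 + v3 == T1 + T2 + T3)%N then f (T3 - v3)%N (T2 - v2)%N else 0.
Proof.
move=> h1 h2 h3; case: ifP => hj.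
  have hi : (T3 - v3 < j.+1)%N by lia.
  rewrite (bigD1 (Ordinal hi)) //= [X in _ + X]big1 ?addr0; last first.
    move=> i /eqP hne; apply: big1 => l _; rewrite /ind.
    case: (i + v3 == T3)%N / eqP => e; last by rewrite !andbF mulr0.
    by exfalso; apply: hne; apply: val_inj => /=; lia.
  have hl : (T2 - v2 < (j - (T3 - v3)).+1)%N by lia.
  rewrite (bigD1 (Ordinal hl)) //= [X in _ + X]big1 ?addr0; last first.
    move=> l /eqP hne; rewrite /ind.
    case: (l + v2 == T2)%N / eqP => e; last by rewrite andbF /= mulr0.
    by exfalso; apply: hne; apply: val_inj => /=; lia.
  rewrite /ind.
  have -> : [&& (j - (T3 - v3) - (T2 - v2) + v1 == T1)%N, (T2 - v2 + v2 == T2)%N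
     & (T3 - v3 + v3 == T3)%N] = true by apply/and3P; split; apply/eqP; lia.
  by rewrite mulr1.
apply: big1 => i _; apply: big1 => l _; rewrite /ind.
case: and3P => [[/eqP e1 /eqP e2 /eqP e3]|]; last by rewrite mulr0.
have : (j + v1 + v2 + v3)%N = (T1 + T2 + T3)%N.
  have : (i < j.+1)%N := ltn_ord i.
  have : (l < (j - i).+1)%N := ltn_ord l.
  lia.
by move/eqP; rewrite hj.
Qed.

Definition ind6 j i l : F :=
  ind 2 1 0 j i l - ind 2 0 1 j i l - ind 1 2 0 j i l
  + ind 1 0 2 j i l + ind 0 2 1 j i l - ind 0 1 2 j i l.

Lemma collapse6 (f : nat -> nat -> F) j :
  (2 <= T1)%N -> (2 <= T2)%N -> (2 <= T3)%N ->
  \sum_(i < j.+1) \sum_(l < (j - i).+1) f i l * ind6 j i l =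
  if (j + 3 == T1 + T2 + T3)%N then
    f T3 (T2 - 1)%N - f (T3 - 1)%N T2 - f T3 (T2 - 2)%N
    + f (T3 - 2)%N T2 + f (T3 - 1)%N (T2 - 2)%N - f (T3 - 2)%N (T2 - 1)%N
  else 0.
Proof.
move=> h1 h2 h3.
rewrite /ind6.
under eq_bigr do under eq_bigr do rewrite !mulrDr !mulrN.
under eq_bigr do rewrite !big_split /= !sumrN.
rewrite !big_split /= !sumrN !collapse //; try lia.
rewrite !addn0 -!addnA /= !subn0.
by case: ifP => _; rewrite ?subr0 ?addr0 ?oppr0.
Qed.
End Collapse.


Section Main.
Variable F : finFieldType.

Definition Vf (a1 a2 a3 : F) := (a1 - a2) * (a1 - a3) * (a2 - a3).

Lemma Lpow (k a1 a2 a3 : F) j : (a1 + a2 + k * a3) ^+ j =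
  \sum_(i < j.+1) \sum_(l < (j - i).+1)
     (('C(j, i) * 'C(j - i, l))%:R * k ^+ i) * (a1 ^+ (j - i - l) * a2 ^+ l * a3 ^+ i).
Proof.
rewrite exprDn; apply: eq_bigr => i _.
rewrite exprDn -mulr_natr mulr_suml mulr_suml; apply: eq_bigr => l _.
rewrite natrM -mulr_natr exprMn; ring.
Qed.

Variables B1 B2 B3 : {set F}.
Variables T1 T2 T3 : nat.
Hypothesis hB1 : #|B1| = T1.+1.
Hypothesis hB2 : #|B2| = T2.+1.
Hypothesis hB3 : #|B3| = T3.+1.

Lemma GS_Vmono e1 e2 e3 :
  GS B1 B2 B3 (fun a1 a2 a3 => Vf a1 a2 a3 * (a1 ^+ e1 * a2 ^+ e2 * a3 ^+ e3)) =
    mu B1 (e1 + 2) * mu B2 (e2 + 1) * mu B3 (e3 + 0)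
  - mu B1 (e1 + 2) * mu B2 (e2 + 0) * mu B3 (e3 + 1)
  - mu B1 (e1 + 1) * mu B2 (e2 + 2) * mu B3 (e3 + 0)
  + mu B1 (e1 + 1) * mu B2 (e2 + 0) * mu B3 (e3 + 2)
  + mu B1 (e1 + 0) * mu B2 (e2 + 2) * mu B3 (e3 + 1)
  - mu B1 (e1 + 0) * mu B2 (e2 + 1) * mu B3 (e3 + 2).
Proof.
rewrite -!GS_mono -!GS_opp -!GS_add; apply: GS_ext => a1 a2 a3.
rewrite /Vf !exprD !expr0 !expr1 !expr2; ring.
Qed.

Lemma GS_Vind j i l : (j + 3 <= T1 + T2 + T3)%N -> (i <= j)%N -> (l <= j - i)%N ->
  GS B1 B2 B3 (fun a1 a2 a3 => Vf a1 a2 a3 * (a1 ^+ (j - i - l) * a2 ^+ l * a3 ^+ i)) =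
  ind6 F T1 T2 T3 j i l.
Proof.
move=> hj hi hl.
rewrite GS_Vmono /ind6 /ind !mu3 ?hB1 ?hB2 ?hB3 //=; lia.
Qed.

Definition cc (k : F) m i l := ('C(m, i) * 'C(m - i, l))%:R * k ^+ i.

Definition K0 (k : F) m :=
    cc k m T3 (T2 - 1) - cc k m (T3 - 1) T2 - cc k m T3 (T2 - 2)
  + cc k m (T3 - 2) T2 + cc k m (T3 - 1) (T2 - 2) - cc k m (T3 - 2) (T2 - 1).

Lemma GS_main (k : F) (C : {set F}) :
  (2 <= T1)%N -> (2 <= T2)%N -> (2 <= T3)%N -> (T1 + T2 + T3 = #|C| + 3)%N ->
  GS B1 B2 B3 (fun a1 a2 a3 => Vf a1 a2 a3 * \prod_(s in C) (a1 + a2 + k * a3 - s))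
  = K0 k #|C|.
Proof.
move=> h1 h2 h3 hT.
pose P := \prod_(s in C) ('X - s%:P).
have sP : size P = (#|C|).+1 by rewrite /P -big_enum size_prod_XsubC cardE.
have lP : P`_#|C| = 1.
  have : P \is monic by rewrite /P -big_enum monic_prod_XsubC.
  by rewrite monicE lead_coefE sP => /eqP.
rewrite (@GS_ext F B1 B2 B3 _ (fun a1 a2 a3 => \sum_(j < size P) \sum_(i < j.+1) \sum_(l < (j - i).+1)
   (P`_j * cc k j i l) * (Vf a1 a2 a3 * (a1 ^+ (j - i - l) * a2 ^+ l * a3 ^+ i)))); last first.
  move=> a1 a2 a3.
  have -> : \prod_(s in C) (a1 + a2 + k * a3 - s) = P.[a1 + a2 + k * a3].
    by rewrite /P horner_prod; apply: eq_bigr => s _; rewrite hornerXsubC.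
  rewrite horner_coef mulr_sumr; apply: eq_bigr => j _.
  rewrite Lpow !mulr_sumr; apply: eq_bigr => i _.
  rewrite !mulr_sumr; apply: eq_bigr => l _.
  rewrite /cc; ring.
rewrite GS_sum.
under eq_bigr do rewrite GS_sum.
under eq_bigr do under eq_bigr do rewrite GS_sum.
have E : forall j : 'I_(size P), \sum_(i < j.+1) \sum_(l < (j - i).+1)
   GS B1 B2 B3 (fun a1 a2 a3 => (P`_j * cc k j i l) * (Vf a1 a2 a3 * (a1 ^+ (j - i - l) * a2 ^+ l * a3 ^+ i)))
   = if (j + 3 == T1 + T2 + T3)%N then
    P`_j * cc k j T3 (T2 - 1) - P`_j * cc k j (T3 - 1) T2 - P`_j * cc k j T3 (T2 - 2)
    + P`_j * cc k j (T3 - 2) T2 + P`_j * cc k j (T3 - 1) (T2 - 2) - P`_j * cc k j (T3 - 2) (T2 - 1)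
    else 0.
  move=> j; rewrite -(collapse6 (fun i l => P`_j * cc k j i l)) //.
  apply: eq_bigr => i _; apply: eq_bigr => l _.
  rewrite GS_scale GS_Vind //.
  - have : (j < #|C|.+1)%N by rewrite -sP; exact: ltn_ord.
    lia.
  - have := ltn_ord i; lia.
  - have := ltn_ord l; lia.
rewrite (eq_bigr _ (fun j _ => E j)).
rewrite sP big_ord_recr /= big1; last first.
  move=> j _; have := ltn_ord j; move=> hj; rewrite hT; case: eqP => // /=; lia.
rewrite add0r hT eqxx lP /K0; ring.
Qed.

End Main.


Lemma binbin m i l : (i + l <= m)%N ->
  ('C(m, i) * 'C(m - i, l) * (i`! * l`! * (m - i - l)`!))%N = m`!.
Proof.
move=> h.
have hi : (i <= m)%N by lia.
have hl : (l <= m - i)%N by lia.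
rewrite -(bin_fact hi) -(bin_fact hl).
ring.
Qed.

Section Closed.
Variable F : finFieldType.
Variables x y z : nat.
Let m := (x + y + z + 3)%N.
Hypothesis hF : forall n, (0 < n <= m)%N -> (n%:R : F) != 0.

Lemma factF n : (n <= m)%N -> (n`!%:R : F) != 0.
Proof.
elim: n => [|n IH] h; first by rewrite fact0 oner_eq0.
by rewrite factS natrM mulf_neq0 ?IH ?hF //; lia.
Qed.

Lemma ccE (k : F) i l : (i + l <= m)%N ->
  cc k m i l = m`!%:R / (i`!%:R * l`!%:R * (m - i - l)`!%:R) * k ^+ i.
Proof.
move=> h; rewrite /cc; congr (_ * _).
have hd : (i`!%:R * l`!%:R * (m - i - l)`!%:R : F) != 0.
  by rewrite !mulf_neq0 // factF //; lia.
apply: (mulIf hd); rewrite mulfVK // -!natrM.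
by rewrite binbin.
Qed.

Lemma K0_closed (k : F) :
  K0 y.+2 z.+2 k m =
  m`!%:R / (x.+2`!%:R * y.+2`!%:R * z.+2`!%:R) * k ^+ z *
  ((x.+2%:R - y.+2%:R) * (x.+2%:R * y.+2%:R * k ^+ 2
     - z.+2%:R * (x.+2%:R + y.+2%:R - 1) * k + z.+2%:R * (z.+2%:R - 1))).
Proof.
rewrite /K0.
have -> : (y.+2 - 1 = y.+1)%N by lia.
have -> : (y.+2 - 2 = y)%N by lia.
have -> : (z.+2 - 1 = z.+1)%N by lia.
have -> : (z.+2 - 2 = z)%N by lia.
rewrite !ccE; try (rewrite /m; lia).
have -> : (m - z.+2 - y.+1 = x)%N by rewrite /m; lia.
have -> : (m - z.+1 - y.+2 = x)%N by rewrite /m; lia.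
have -> : (m - z.+2 - y = x.+1)%N by rewrite /m; lia.
have -> : (m - z - y.+2 = x.+1)%N by rewrite /m; lia.
have -> : (m - z.+1 - y = x.+2)%N by rewrite /m; lia.
have -> : (m - z - y.+1 = x.+2)%N by rewrite /m; lia.
have hx : (x`!%:R : F) != 0 by apply: factF; rewrite /m; lia.
have hy : (y`!%:R : F) != 0 by apply: factF; rewrite /m; lia.
have hz : (z`!%:R : F) != 0 by apply: factF; rewrite /m; lia.
have hx1 : (x.+1%:R : F) != 0 by apply: hF; rewrite /m; lia.
have hx2 : (x.+2%:R : F) != 0 by apply: hF; rewrite /m; lia.
have hy1 : (y.+1%:R : F) != 0 by apply: hF; rewrite /m; lia.
have hy2 : (y.+2%:R : F) != 0 by apply: hF; rewrite /m; lia.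
have hz1 : (z.+1%:R : F) != 0 by apply: hF; rewrite /m; lia.
have hz2 : (z.+2%:R : F) != 0 by apply: hF; rewrite /m; lia.
rewrite !factS !natrM !exprS.
move: hx hy hz hx1 hx2 hy1 hy2 hz1 hz2.
move: (x`!%:R : F) (y`!%:R : F) (z`!%:R : F) (m`!%:R : F) => X Y Z M.
move=> hx hy hz hx1 hx2 hy1 hy2 hz1 hz2.
have e1 : forall n, (1 + n%:R : F) = n.+1%:R by move=> n; rewrite addrC natr1.
have e2 : forall n, (2 + n%:R : F) = n.+2%:R.
  by move=> n; rewrite -natrD add2n.
field.
by rewrite !e1 !e2 hx hy hz hx1 hx2 hy1 hy2 hz1 hz2.
Qed.
End Closed.


Lemma exists_sub (T : finType) (A : {set T}) n : (n <= #|A|)%N ->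
  exists B : {set T}, B \subset A /\ #|B| = n.
Proof.
move=> h; exists [set x in take n (enum A)]; split.
  by apply/subsetP => x; rewrite inE => /mem_take; rewrite mem_enum.
rewrite cardsE; have /card_uniqP -> := take_uniq n (enum_uniq (mem A)).
by rewrite size_takel // -cardE.
Qed.

Lemma exists_sup (T : finType) (S : {set T}) n : (#|S| <= n)%N -> (n <= #|T|)%N ->
  exists C : {set T}, S \subset C /\ #|C| = n.
Proof.
move=> h1 h2.
have : (n - #|S| <= #|~: S|)%N by have := cardsC S; lia.
case/exists_sub => B [sB cB]; exists (S :|: B); split; first exact: subsetUl.
rewrite cardsU cB.
have -> : S :&: B = set0.
  apply/setP => x; rewrite !inE; apply/negP => /andP[xS xB].
  by move/subsetP: sB => /(_ _ xB); rewrite inE xS.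
by rewrite cards0; lia.
Qed.

Definition Wf (F : fieldType) x y z (c : F) :=
  ((x.+2%:R - y.+2%:R) * (x.+2%:R * y.+2%:R * c ^+ 2
     - z.+2%:R * (x.+2%:R + y.+2%:R - 1) * c + z.+2%:R * (z.+2%:R - 1))).

Section Core.
Variable p : nat.
Hypothesis hp : prime p.

Lemma natF0 n : (0 < n < p)%N -> (n%:R : 'F_p) != 0.
Proof.
move=> /andP[h1 h2]; rewrite -(dvdn_pcharf (pchar_Fp hp)).
by rewrite gtnNdvd.
Qed.

Lemma subF0 a b : (a < p)%N -> (b < p)%N -> a != b -> (a%:R - b%:R : 'F_p) != 0.
Proof.
case: (ltngtP a b) => h ha hb ne.
- rewrite -oppr_eq0 opprB -(natrB _ (ltnW h)); apply: natF0; lia.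
- rewrite -(natrB _ (ltnW h)); apply: natF0; lia.
- by move: ne; rewrite ?h.
Qed.

Lemma core (k : nat) (A C : {set 'F_p}) x y z :
  (x.+3 <= #|A|)%N -> (y.+3 <= #|A|)%N -> (z.+3 <= #|A|)%N ->
  Sk k A \subset C -> #|C| = (x + y + z + 3)%N -> (x + y + z + 3 < p)%N ->
  (k%:R : 'F_p) ^+ z * Wf x y z (k%:R : 'F_p) = 0.
Proof.
move=> h1 h2 h3 sC cC hm.
have [B1 [s1 c1]] := exists_sub h1.
have [B2 [s2 c2]] := exists_sub h2.
have [B3 [s3 c3]] := exists_sub h3.
have := GS_main c1 c2 c3 (k%:R : 'F_p) (C := C).
rewrite cC => /(_ isT isT isT) H.
have {H} := H ltac:(lia).
rewrite K0_closed; last by move=> n hn; apply: natF0; lia.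
have -> : GS B1 B2 B3 (fun a1 a2 a3 => Vf a1 a2 a3 *
    \prod_(s in C) (a1 + a2 + k%:R * a3 - s)) = 0.
  apply: big1 => a1 a1B; apply: big1 => a2 a2B; apply: big1 => a3 a3B.
  have a1A : a1 \in A by move/subsetP: s1; apply.
  have a2A : a2 \in A by move/subsetP: s2; apply.
  have a3A : a3 \in A by move/subsetP: s3; apply.
  case: (eqVneq a1 a2) => [->|n12]; first by rewrite /Vf subrr !(mul0r, mulr0).
  case: (eqVneq a1 a3) => [->|n13]; first by rewrite /Vf subrr !(mul0r, mulr0).
  case: (eqVneq a2 a3) => [->|n23]; first by rewrite /Vf subrr !(mul0r, mulr0).
  have LC : a1 + a2 + k%:R * a3 \in C.
    move/subsetP: sC; apply; rewrite inE.
    apply/existsP; exists a1; rewrite a1A /=; apply/existsP; exists a2; rewrite a2A /=.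
    apply/existsP; exists a3; rewrite a3A /= n12 n13 n23 /=.
    by rewrite mulr_natl.
  by rewrite (bigD1 _ LC) /= subrr mul0r !mulr0.
move/esym/eqP; rewrite -mulrA mulf_eq0 => /orP[|/eqP //].
have hF : forall n, (0 < n <= x + y + z + 3)%N -> (n%:R : 'F_p) != 0.
  by move=> n hn; apply: natF0; lia.
have hf : forall n, (n <= x + y + z + 3)%N -> (n`!%:R : 'F_p) != 0.
  by move=> n hn; apply: (factF hF).
move=> H; exfalso; move: H; apply/negP.
by rewrite mulf_neq0 ?invr_neq0 ?mulf_neq0 ?hf //; lia.
Qed.
End Core.


Lemma main_aux (p k : nat) (A : {set 'F_p}) :
  prime p -> (3 <= k <= p - 1)%N -> (k + 2 <= #|A|)%N ->
  [/\ (3 * #|A| <= p + 6 -> 3 * #|A| - 6 <= #|Sk k A|)%N,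
      ((3 * #|A| = p + 7)%N -> (p - 2 <= #|Sk k A|)%N)
    & ((p + 8 <= 3 * #|A|)%N -> Sk k A = [set: 'F_p])].
Proof.
move=> hp /andP[hk3 hkp] hkA.
have hp4 : (4 <= p)%N by lia.
have op : odd p.
  by case: (even_prime hp) => [e|//]; rewrite e in hp4.
have hp5 : (5 <= p)%N.
  case: (p =P 4) => [e|ne]; first by rewrite e in op.
  lia.
have kF : (k%:R : 'F_p) != 0 by apply: natF0 => //; lia.
have k1E : (k%:R - 1 : 'F_p) = (k.-1)%:R.
  by rewrite -{1}(prednK (_ : (0 < k)%N)) ?(leq_trans _ hk3) // -natr1 addrK.
have k1F : (k%:R - 1 : 'F_p) != 0 by rewrite k1E; apply: natF0 => //; lia.
have LemI : forall y, (y + 4 <= #|A|)%N -> (3 * y + 5 < p)%N -> (3 * y + 6 <= #|Sk k A|)%N.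
  move=> y h1 h2; rewrite leqNgt; apply/negP => hS.
  have [C [sC cC]] : exists C : {set 'F_p}, Sk k A \subset C /\ #|C| = (3 * y + 5)%N.
    by apply: exists_sup; [lia | rewrite card_Fp //; lia].
  have := core hp (k := k) (A := A) (C := C) (x := y.+1) (y := y) (z := y.+1) (ltac:(lia)) (ltac:(lia)) (ltac:(lia)) sC
    (ltac:(rewrite cC; lia)) (ltac:(lia)).
  have -> : Wf y.+1 y y.+1 (k%:R : 'F_p) = y.+3%:R * y.+2%:R * (k%:R - 1) ^+ 2.
    by rewrite /Wf; ring.
  apply/eqP; rewrite !mulf_neq0 ?expf_neq0 //; apply: natF0 => //; lia.
split.
- move=> h; have := LemI (#|A| - 4)%N; lia.
- move=> h; have := LemI (#|A| - 5)%N; lia.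
move=> hn.
apply/setP => w; rewrite in_setT; apply/negPn/negP => wS.
have sC : Sk k A \subset [set~ w].
  by apply/subsetP => v vS; rewrite !inE; apply/eqP => e; move: wS; rewrite -e vS.
have cC : #|[set~ w]| = p.-1 by rewrite cardsC1 card_Fp.
have Core := fun x y z h1 h2 h3 hc =>
  core hp (k := k) (A := A) (C := [set~ w]) (x := x) (y := y) (z := z) h1 h2 h3 sC hc.
case: (p =P 7) => [e7|n7].
  have := Core 0%N 1%N 2%N ltac:(lia) ltac:(lia) ltac:(lia) (ltac:(rewrite cC e7; lia)) (ltac:(lia)).
  have E : Wf 0 1 2 (k%:R : 'F_p) = (16 * k)%:R - (6 * k * k + 12)%:R.
    by rewrite /Wf natrD !natrM; ring.
  rewrite E => /eqP; rewrite mulf_eq0 expf_eq0 (negbTE kF) andbF /=.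
  apply/negP.
  have gen : forall a b : nat, (a %% 7 != b %% 7)%N -> ((a%:R - b%:R : 'F_p) != 0).
    move=> a b hab; rewrite -(Fp_nat_mod hp a) -(Fp_nat_mod hp b).
    apply: subF0 => //; rewrite ?e7 ?ltn_pmod //.
  apply: gen.
  have hk : k = 3%N \/ k = 4%N \/ k = 5%N \/ k = 6%N by lia.
  by case: hk => [->|[->|[->|->]]].
case: (2 * k + 1 =P p)%N => [e2k|n2k].
  have [y ey] : exists y, k = y.+2 by exists (k - 2)%N; lia.
  subst k.
  have := Core 0%N y y.+1 ltac:(lia) ltac:(lia) ltac:(lia) (ltac:(rewrite cC; lia)) (ltac:(lia)).
  have -> : Wf 0 y y.+1 (y.+2%:R : 'F_p) = - (y%:R * y.+2%:R ^+ 2 * y.+1%:R).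
    by rewrite /Wf; ring.
  apply/eqP; rewrite mulf_neq0 ?expf_neq0 // oppr_eq0 !mulf_neq0 ?expf_neq0 //;
    apply: natF0 => //; lia.
have hp0 : (p%:R : 'F_p) = 0 by apply: pchar_Fp_0.
have key : forall x y, (2 * x + y + 4)%N = p -> (x + 3 <= #|A|)%N -> (y + 3 <= #|A|)%N ->
    x != y -> False.
  move=> x y e h1 h2 nxy.
  have := Core x y x ltac:(lia) ltac:(lia) ltac:(lia) (ltac:(rewrite cC; lia)) (ltac:(lia)).
  have -> : Wf x y x (k%:R : 'F_p) =
     (x.+2%:R - y.+2%:R) * x.+2%:R * (k%:R - 1) * (y.+2%:R * k%:R - x.+1%:R).
    by rewrite /Wf; ring.
  apply/eqP; rewrite mulf_neq0 ?expf_neq0 // !mulf_neq0 //.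
  - by apply: subF0 => //; lia.
  - by apply: natF0 => //; lia.
  apply/negP => /eqP H.
  have E : 2 * (y.+2%:R * k%:R - x.+1%:R : 'F_p) = y.+2%:R * (2 * k + 1)%:R - (2 * x + y + 4)%:R.
    by ring.
  move: E; rewrite H e hp0 mulr0 subr0 => /esym /eqP.
  have hy0 : (y.+2%:R : 'F_p) != 0 by apply: natF0 => //; lia.
  rewrite mulf_eq0 (negbTE hy0).
  rewrite /= -(dvdn_pcharf (pchar_Fp hp)) => hd.
  have : (2 * k + 1 < 2 * p)%N by lia.
  move: hd n2k; clear; move=> /dvdnP [q hq] ne lt.
  case: q hq => [|[|q]] hq; first by lia.
    by apply: ne; rewrite hq mul1n.
  move: hq lt; rewrite !mulSn; lia.
case: (leqP (2 * #|A| - 2) p) => hA.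
  have := key (#|A| - 3)%N (p + 2 - 2 * #|A|)%N. apply; lia.
have [x ex] : exists x, p = (2 * x + 5)%N.
  exists ((p - 5)./2); have := odd_double_half p; rewrite op -!muln2.
  have := odd_double_half (p - 5).
  have : odd (p - 5) = false by rewrite oddB ?op //; lia.
  move=> ->; rewrite -!muln2; lia.
have := key x 1%N. apply; lia.
Qed.

Local Close Scope ring_scope.
Theorem mainTheorem9 (p k : nat) (A : {set 'F_p}) :
  prime p -> 3 <= k <= p - 1 -> k + 2 <= #|A| ->
  [/\ (3 * #|A| <= p + 6 -> 3 * #|A| - 6 <= #|Sk k A|),
      (3 * #|A| = p + 7 -> p - 2 <= #|Sk k A|)
    & (p + 8 <= 3 * #|A| -> Sk k A = [set: 'F_p])].
Proof. exact: main_aux. Qed.
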